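(* Let $n>0$ be the total computational load and let $p_0,\dots,p_{k-1}$ be $k$ processing units (PUs), each with a speed $c_s(p_i)>0$ and a memory capacity $m_{cap}(p_i)>0$. Run the following greedy procedure. First sort the PUs so that $c_s(p_0)/m_{cap}(p_0)\ge c_s(p_1)/m_{cap}(p_1)\ge\dots\ge c_s(p_{k-1})/m_{cap}(p_{k-1})$. Initialize $\mathrm{jLoad}\gets n$ and $\mathrm{jSpeed}\gets C_s=\sum_{i=0}^{k-1}c_s(p_i)$. Then for $i=0,1,\dots,k-1$ in order: - compute $\mathrm{desW}(b_i)=c_s(p_i)\cdot \mathrm{jLoad}/\mathrm{jSpeed}$; - if $\mathrm{desW}(b_i)>m_{cap}(p_i)$, set $tw(b_i)\gets m_{cap}(p_i)$ and call $p_i$ saturated; otherwise set $tw(b_i)\gets \mathrm{desW}(b_i)$ and call $p_i$ non-saturated; - update $\mathrm{jLoad}\gets\mathrm{jLoad}-tw(b_i)$ and $\mathrm{jSpeed}\gets\mathrm{jSpeed}-c_s(p_i)$. Then no saturated PU appears after a non-saturated PU in the sorted sequence. That is, if $p_i$ is non-saturated, then every $p_j$ with $j>i$ is also non-saturated.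
   Context: This procedure computes target block weights $tw(b_i)$ for distributing an application graph with $n$ unit-weight vertices over heterogeneous PUs. Block $b_i$ is assigned to PU $p_i$. *)

(* Defs.v *)
From mathcomp Require Import all_boot all_order all_algebra.
Set Implicit Arguments. Unset Strict Implicit. Unset Printing Implicit Defensive.
Import Order.TTheory GRing.Theory Num.Theory.
Local Open Scope ring_scope.

Section Greedy.
Variable R : realFieldType.
(* k PUs indexed 0..k-1 (already in sorted order), speeds cs, capacities mcap,
   total load n (number of unit-weight vertices). *)
Variables (k n : nat) (cs mcap : nat -> R).

(* state i = (jLoad, jSpeed) at the start of iteration i *)
Fixpoint greedy_state (i : nat) : R * R :=
  match i with
  | 0%N => (n%:R, \sum_(j < k) cs j)
  | i'.+1 =>
      let '(L, Sp) := greedy_state i' in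
      let d := cs i' * L / Sp in
      (L - (if mcap i' < d then mcap i' else d), Sp - cs i')
  end.

Definition desW (i : nat) : R := cs i * (greedy_state i).1 / (greedy_state i).2.

Definition tw (i : nat) : R := if mcap i < desW i then mcap i else desW i.

Definition saturated (i : nat) : bool := mcap i < desW i.
End Greedy.

(* Main.v *)
Require Import Defs.
From mathcomp Require Import all_boot all_order all_algebra.
From mathcomp Require Import ring lra.
Import Order.TTheory GRing.Theory Num.Theory.
Local Open Scope ring_scope.

Lemma state2 (R : realFieldType) (k n : nat) (cs mcap : nat -> R) i :
  (greedy_state k n cs mcap i).2 = \sum_(j < k) cs j - \sum_(0 <= j < i) cs j.
Proof.
elim: i => [|i IH]; first by rewrite big_geq // subr0.
rewrite /=; case: (greedy_state k n cs mcap i) IH => L S /= ->.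
rewrite big_nat_recr //=; lra.
Qed.

Lemma state2pos (R : realFieldType) (k n : nat) (cs mcap : nat -> R) i :
  (forall i, (i < k)%N -> 0 < cs i) -> (i < k)%N ->
  0 < (greedy_state k n cs mcap i).2.
Proof.
move=> hc hik; rewrite state2.
rewrite -(big_mkord xpredT) (big_cat_nat _ (n:=i)) //=; last exact: ltnW.
rewrite addrC addrK big_ltn //= ltr_pwDl ?hc //.
rewrite big_seq sumr_ge0 // => j; rewrite mem_index_iota => /andP[_ ?].
exact/ltW/hc.
Qed.

Lemma step (R : realFieldType) (k n : nat) (cs mcap : nat -> R) i :
  (forall i, (i < k)%N -> 0 < cs i) ->
  (forall i, (i < k)%N -> 0 < mcap i) ->
  (forall i j, (i <= j)%N -> (j < k)%N -> cs j / mcap j <= cs i / mcap i) ->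
  (i.+1 < k)%N ->
  ~~ saturated k n cs mcap i -> ~~ saturated k n cs mcap i.+1.
Proof.
move=> hc hm hr hik.
have hik' : (i < k)%N by apply: ltnW.
have S0 := @state2pos _ _ n _ mcap _ hc hik'.
have S1 := @state2pos _ _ n _ mcap _ hc hik.
move: S1; rewrite /saturated /desW /= -!leNgt.
case E: (greedy_state k n cs mcap i) S0 => [L S] /= S0.
move=> S1 hi; rewrite (ltNge (mcap i)) hi /=.
have -> : cs i.+1 * (L - cs i * L / S) / (S - cs i) = cs i.+1 * (L / S).
  by field; rewrite ?gt_eqF.
have a0 := hc _ hik'; have c0 := hc _ hik; have b0 := hm _ hik'; have e0 := hm _ hik.
have := hr _ _ (leqnSn i) hik.
rewrite ler_pdivrMr // mulrAC ler_pdivlMr //.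
move: hi a0 c0 b0 e0; rewrite -!mulrA.
set x := L / S; set a := cs i; set c := cs i.+1; set b := mcap i; set e := mcap i.+1.
move=> hi a0 c0 b0 e0 h.

clearbody x a b c e.
rewrite leNgt; apply/negP => g.
have p1 : 0 <= c * (b - a * x).
 apply: mulr_ge0; lra.
have p2 : 0 < a * (c * x - e) by apply: mulr_gt0; lra.
rewrite mulrBr in p1; rewrite mulrBr in p2.
have p3 : c * (a * x) = a * (c * x) by ring.
clear E; lra.
Qed.

Theorem lemma1 (R : realFieldType) (k n : nat) (cs mcap : nat -> R) :
  (0 < n)%N ->
  (forall i, (i < k)%N -> 0 < cs i) ->
  (forall i, (i < k)%N -> 0 < mcap i) ->
  (forall i j, (i <= j)%N -> (j < k)%N -> cs j / mcap j <= cs i / mcap i) ->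
  forall i j, (i < j)%N -> (j < k)%N ->
    ~~ saturated k n cs mcap i -> ~~ saturated k n cs mcap j.
Proof.
move=> _ hc hm hr i j hij hjk hi.
elim: j hij hjk => [//|j IH] hij hjk.
have [e|hne] := eqVneq i j; first by subst; apply: step.
apply: step => //; apply: IH; last exact: ltnW.
by rewrite ltn_neqAle hne -ltnS.
Qed.
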